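(* Let $n\ge 3$, $m\ge 1$, and let $f=x_0^{a_0}x_1^{a_1}\cdots x_{n+1}^{a_{n+1}}$ be a monomial. Define $g=x_0^{b_0}x_1^{b_1}\cdots x_{n+1}^{b_{n+1}}$ with $b_0=a_0$, $b_{n+1}=a_{n+1}$ and $b_i=\max\{a_i-1,0\}$ for $i=1,\dots,n$. If $f\in I_{B_n}^{(m)}$, then $g\in I_{B_n}^{(m-(n-2))}$. Moreover $\deg(g)\ge\deg(f)-n$, with equality if $a_i\ne 0$ for all $i=1,\dots,n$.
   Context: Let $k$ be a field. $Q_n$ is the cycle graph on vertices $1,\dots,n$ (edges $\{i,i+1\}$ for $1\le i\le n-1$ and $\{n,1\}$). $B_n$ is the simplicial complex on $\{0,\dots,n+1\}$ with facets $\{0,i,j\}$ and $\{n+1,i,j\}$ for each edge $\{i,j\}$ of $Q_n$, and $I_{B_n}\subset R=k[x_0,\dots,x_{n+1}]$ is its Stanley-Reisner ideal, generated by $\prod_{i\in\tau}x_i$ over non-faces $\tau$ of $B_n$. For a homogeneous ideal $I$, $I^{(m)}=R\cap\bigcap_{P\in\mathrm{Ass}(I)}I^mR_P$ for $m\ge1$, and by convention $I^{(j)}=R$ for $j\le 0$. *)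

(* Defs.v *)
From HB Require Import structures.
From mathcomp Require Import all_boot all_order all_algebra.
From mathcomp Require Import mpoly.
Set Implicit Arguments. Unset Strict Implicit. Unset Printing Implicit Defensive.
Import Order.TTheory GRing.Theory Num.Theory.
Local Open Scope ring_scope.

Definition ideal_gen (R : comNzRingType) (S : R -> Prop) (f : R) : Prop :=
  exists s : seq (R * R),
    (forall p, p \in s -> S p.2) /\ f = \sum_(p <- s) p.1 * p.2.

Definition ideal_pow (R : comNzRingType) (I : R -> Prop) (m : nat) : R -> Prop :=
  ideal_gen (fun g => exists s : seq R,
     size s = m /\ (forall x, x \in s -> I x) /\ g = \prod_(x <- s) x).

Definition is_ideal (R : comNzRingType) (P : R -> Prop) : Prop :=
  [/\ P 0, (forall a b, P a -> P b -> P (a + b)) & (forall r a, P a -> P (r * a))].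

Definition is_prime_ideal (R : comNzRingType) (P : R -> Prop) : Prop :=
  [/\ is_ideal P, ~ P 1 & (forall a b, P (a * b) -> P a \/ P b)].

(* P in Ass(I): P is a prime of the form (I : h). *)
Definition associated_prime (R : comNzRingType) (I P : R -> Prop) : Prop :=
  is_prime_ideal P /\ exists h : R, forall x, P x <-> I (x * h).

(* I^(j) = R \cap \bigcap_{P in Ass I} I^j R_P for j >= 1, and R for j <= 0.
   f/1 in I^j R_P  iff  s f in I^j for some s not in P. *)
Definition symbolic_power (R : comNzRingType) (I : R -> Prop) (j : int) (f : R) : Prop :=
  (j <= 0)%R \/
  forall P, associated_prime I P -> exists s, ~ P s /\ ideal_pow I `|j|%N (s * f).

(* Edges of the cycle Q_n on vertices 1..n (ordered pair version). *)
Definition Qedge (n i j : nat) : bool :=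
  ((1 <= i)%N && (i < n)%N && (j == i.+1)) || ((i == n) && (j == 1%N)).

Definition Qedge_sym (n i j : nat) : bool := Qedge n i j || Qedge n j i.

Definition B_facet (n : nat) (F : {set 'I_(n.+2)}) : bool :=
  [exists i : 'I_(n.+2), exists j : 'I_(n.+2),
     Qedge_sym n i j &&
     ((F == [set ord0; i; j]) || (F == [set (@ord_max n.+1); i; j]))].

Arguments B_facet : clear implicits.

Definition B_face (n : nat) (t : {set 'I_(n.+2)}) : bool :=
  [exists F : {set 'I_(n.+2)}, B_facet n F && (t \subset F)].

Arguments B_face : clear implicits.


Definition I_B (k : fieldType) (n : nat) : {mpoly k[n.+2]} -> Prop :=
  ideal_gen (fun g => exists t : {set 'I_(n.+2)},
     ~~ B_face n t /\ g = \prod_(i in t) 'X_i).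
Arguments I_B : clear implicits.
Arguments symbolic_power : clear implicits.

(* Main.v *)
Require Import Defs.
From HB Require Import structures.
From mathcomp Require Import all_boot all_order all_algebra.
From mathcomp Require Import mpoly.
From mathcomp Require Import zify.
From Stdlib Require Import Classical.
Import Order.TTheory GRing.Theory Num.Theory.
Local Open Scope ring_scope.

Section Aux.
Variable k : fieldType.
Variable n : nat.
Local Notation MP := {mpoly k[n.+2]}.
Local Notation MN := 'X_{1..n.+2}.

Definition degG (G : {set 'I_n.+2}) (u : MN) : nat :=
  (\sum_(i < n.+2 | i \notin G) u i)%N.

Definition QG (G : {set 'I_n.+2}) (r : nat) (x : MP) : Prop :=
  forall u, x@_u != 0 -> (r <= degG G u)%N.

Lemma degGD G u v : degG G (u + v)%MM = (degG G u + degG G v)%N.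
Proof. by rewrite /degG -big_split /=; apply: eq_bigr => i _; rewrite mnmDE. Qed.

Lemma QG0 G x : QG G 0 x.
Proof. by move=> u _. Qed.

Lemma QG_add G r x y : QG G r x -> QG G r y -> QG G r (x + y).
Proof.
move=> hx hy u; rewrite mcoeffD.
case: (eqVneq (x@_u) 0) => [->|/hx //]; rewrite add0r; exact: hy.
Qed.

Lemma QG_zero G r : QG G r 0.
Proof. by move=> u; rewrite mcoeff0 eqxx. Qed.

Lemma QG_sum G r (I : Type) (s : seq I) (P : pred I) (F : I -> MP) :
  (forall i, P i -> QG G r (F i)) -> QG G r (\sum_(i <- s | P i) F i).
Proof.
move=> h; elim/big_ind: _ => //; [exact: QG_zero | exact: QG_add].
Qed.

Lemma QG_mul G r1 r2 x y : QG G r1 x -> QG G r2 y -> QG G (r1 + r2) (x * y).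
Proof.
move=> hx hy u; rewrite -mcoeff_msupp => /msuppM_le /allpairsP [[m1 m2] /= [h1 h2 ->]].
rewrite degGD; apply: leq_add; [apply: hx | apply: hy]; by rewrite -mcoeff_msupp.
Qed.

Lemma QG_mulr G r x y : QG G r y -> QG G r (x * y).
Proof. by move=> hy; rewrite -[r]add0n; apply: QG_mul => //; exact: QG0. Qed.

Lemma QG_X G r u : (r <= degG G u)%N -> QG G r ('X_[u]).
Proof. move=> h v; rewrite mcoeffX; case: (eqVneq u v) => [<-//|_]; by rewrite eqxx. Qed.

Lemma QG_le G r r' x : (r' <= r)%N -> QG G r x -> QG G r' x.
Proof. by move=> le h u /h; apply: leq_trans. Qed.

Definition monoT (t : {set 'I_n.+2}) : MN := (\sum_(i in t) U_(i))%MM.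

Lemma monoTE t j : monoT t j = (j \in t).
Proof.
rewrite /monoT mnm_sumE; case: (boolP (j \in t)) => jt.
  rewrite (bigD1 j) //= mnm1E eqxx big1 // => i /andP[_ /negbTE].
  by rewrite mnm1E => ->.
rewrite big1 // => i it; rewrite mnm1E; case: eqP => // ij.
by move: jt; rewrite -ij it.
Qed.


Lemma prodX (t : {set 'I_n.+2}) : \prod_(i in t) ('X_i : MP) = 'X_[monoT t].
Proof. by rewrite mprodXE. Qed.

Lemma facet_shape G : (3 <= n)%N -> B_facet n G ->
  exists c i j : 'I_n.+2, G = [set c; i; j] /\
   ((c : nat) = 0 \/ (c : nat) = n.+1)%N /\ (1 <= i <= n)%N /\ (1 <= j <= n)%N
   /\ (i : nat) <> j.
Proof.
move=> n3 /existsP [i /existsP [j /andP [hq hG]]].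
have hij : (1 <= i <= n)%N /\ (1 <= j <= n)%N /\ (i : nat) <> j.
  move: hq; rewrite /Qedge_sym => /orP [] /orP [] /andP [].
  - by move=> /andP [h1 h2] /eqP h3; lia.
  - by move=> /eqP h1 /eqP h3; lia.
  - by move=> /andP [h1 h2] /eqP h3; lia.
  - by move=> /eqP h1 /eqP h3; lia.
case/orP: hG => /eqP ->.
  by exists ord0, i, j; split=> //; split=> //; left.
by exists ord_max, i, j; split=> //; split=> //; right.
Qed.

Lemma card3_le (c i j : 'I_n.+2) : (#|[set c; i; j]| <= 3)%N.
Proof.
rewrite -setUA cardsU1 cards2; case: (c \notin _) => //=; case: (i != j) => //.
Qed.

Lemma card3_eq (c i j : 'I_n.+2) : c != i -> c != j -> i != j -> #|[set c; i; j]| = 3%N.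
Proof.
move=> ci cj ij; rewrite -setUA cardsU1 cards2 ij !inE negb_or ci cj //.
Qed.

Lemma facet_card G : B_facet n G -> (#|G| <= 3)%N.
Proof.
move=> /existsP [i /existsP [j /andP [_ /orP [] /eqP ->]]]; exact: card3_le.
Qed.

Lemma facet_card3 G : (3 <= n)%N -> B_facet n G -> #|G| = 3%N.
Proof.
move=> n3 /(facet_shape _ n3) [c [i [j [-> [hc [hi [hj hij]]]]]]].
by apply: card3_eq; apply/eqP => /(congr1 val) /=; lia.
Qed.

Lemma nonface_ext G j : (3 <= n)%N -> B_facet n G -> j \notin G -> ~~ B_face n (j |: G).
Proof.
move=> n3 fG jG; apply/existsP => [[F /andP [fF sub]]].
have := subset_leq_card sub; rewrite cardsU1 jG (facet_card3 _ n3 fG).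
by have := facet_card _ fF; lia.
Qed.


Lemma gen_QG G t : B_facet n G -> ~~ B_face n t -> QG G 1 (\prod_(i in t) ('X_i : MP)).
Proof.
move=> fG nt; rewrite prodX; apply: QG_X.
case: (boolP (t \subset G)) => [sub | /subsetPn [j jt jG]].
  by move: nt; rewrite /B_face; case/negP; apply/existsP; exists G; rewrite fG sub.
by rewrite /degG (bigD1 j) //= monoTE jt.
Qed.

Lemma IB_QG G x : B_facet n G -> I_B k n x -> QG G 1 x.
Proof.
move=> fG [s [hs ->]]; rewrite big_seq; apply: QG_sum => p ps; apply: QG_mulr.
by have [t [nt ->]] := hs p ps; exact: gen_QG.
Qed.

Lemma pow_QG G r x : B_facet n G -> ideal_pow (I_B k n) r x -> QG G r x.
Proof.
move=> fG [s [hs ->]]; rewrite big_seq; apply: QG_sum => p ps; apply: QG_mulr.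
have [l [sz [hl ->]]] := hs p ps.
clear hs; elim: l r sz hl => [|y l IH] r sz hl; first by rewrite -sz; exact: QG0.
rewrite big_cons -sz /= -add1n; apply: QG_mul.
  by apply: IB_QG => //; apply: hl; rewrite mem_head.
by apply: IH => // z zl; apply: hl; rewrite in_cons zl orbT.
Qed.

Definition suppm (u : MN) : {set 'I_n.+2} := [set i | u i != 0%N].

Lemma QG_IB x : (forall G, B_facet n G -> QG G 1 x) -> I_B k n x.
Proof.
move=> hQ.
exists [seq (x@_u *: 'X_[u - monoT (suppm u)], \prod_(i in suppm u) ('X_i : MP)) | u <- msupp x].
split.
  move=> p /mapP [u uin ->] /=; exists (suppm u); split=> //.
  apply/negP => /existsP [F /andP [fF sub]].
  have := hQ F fF u; rewrite -mcoeff_msupp => /(_ uin).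
  rewrite /degG big1 // => i iF; apply/eqP; apply: contraNT iF => ui.
  by apply: (subsetP sub); rewrite inE.
rewrite big_map {1}[x]mpolyE; apply: eq_bigr => u _ /=.
rewrite prodX -scalerAl -mpolyXD submK //; apply/mnm_lepP => i.
by rewrite monoTE inE; case: (u i).
Qed.


Definition hG (G : {set 'I_n.+2}) (i : 'I_n.+2) : MP := if i \in G then 'X_i else 0.
Definition phiG G : MP -> MP := mmap (@mpolyC n.+2 k) (hG G).

Lemma phiGM G x y : phiG G (x * y) = phiG G x * phiG G y.
Proof. by rewrite /phiG rmorphM. Qed.

Lemma mmap1G G u : mmap1 (hG G) u = if degG G u == 0%N then 'X_[u] else 0.
Proof.
case: ifP => [d0|/negbT].
  rewrite mpolyXE_id /mmap1; apply: eq_bigr => i _; rewrite /hG.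
  case: ifP => // iG; move: d0; rewrite /degG sum_nat_eq0 => /forallP /(_ i).
  by rewrite iG /= => /eqP ->; rewrite !expr0.
rewrite /degG sum_nat_eq0 => /forallPn [i]; rewrite negb_imply => /andP [iG ui].
rewrite /mmap1 (bigD1 i) //= /hG (negbTE iG) expr0n (negbTE ui) mul0r //.
Qed.

Lemma coef_phi G x v : (phiG G x)@_v = if degG G v == 0%N then x@_v else 0.
Proof.
rewrite /phiG /mmap (raddf_sum (mcoeff v)) /=.
under eq_bigr => u _ do rewrite mcoeffCM.
have ex : x@_v = \sum_(u <- msupp x) x@_u * ('X_[u] : MP)@_v.
  rewrite {1}[x]mpolyE (raddf_sum (mcoeff v)); by apply: eq_bigr => u _; apply: mcoeffZ.
rewrite ex.
case: ifP => dv.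
  apply: eq_bigr => u _; rewrite mmap1G; case: ifP => du //.
  rewrite mcoeff0 mcoeffX; case: eqP => // uv; move: du; by rewrite uv dv.
rewrite big1 // => u _; rewrite mmap1G; case: ifP => du; last by rewrite mcoeff0 mulr0.
rewrite mcoeffX; case: eqP => [uv|]; last by rewrite mulr0.
by move: du; rewrite uv dv.
Qed.

Lemma QG1_phi G x : QG G 1 x <-> phiG G x = 0.
Proof.
split=> [hQ | h0].
  apply/mpolyP => v; rewrite coef_phi mcoeff0; case: ifP => // /eqP d0.
  by case: (eqVneq x@_v 0) => // /hQ; rewrite d0.
move=> u nz; rewrite lt0n; apply/negP => /eqP d0.
by move: nz; have := coef_phi G x u; rewrite h0 d0 eqxx mcoeff0 => <-; rewrite eqxx.
Qed.

Lemma QG_prime G x y : QG G 1 (x * y) -> QG G 1 x \/ QG G 1 y.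
Proof.
rewrite !QG1_phi phiGM => /eqP; rewrite mulf_eq0 => /orP [] /eqP; by [left|right].
Qed.


Lemma assoc_facet P : associated_prime (I_B k n) P ->
  exists G, B_facet n G /\ (forall x, P x <-> QG G 1 x).
Proof.
move=> [[[P0 Padd Pmul] P1 Pprime] [h hP]].
have key : forall x, P x <-> (forall G, B_facet n G -> ~ QG G 1 h -> QG G 1 x).
  move=> x; rewrite hP; split.
    move=> Ixh G fG nh; have := IB_QG _ _ fG Ixh; case/QG_prime => //.
  move=> H; apply: QG_IB => G fG; case: (classic (QG G 1 h)) => qh.
    exact: QG_mulr.
  by rewrite mulrC; apply: QG_mulr; apply: H.
case: (classic (exists G, B_facet n G /\ ~ QG G 1 h /\ forall y, QG G 1 y -> P y)) =>
  [[G [fG [nh hy]]] | H].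
  exists G; split => // x; split => [Px|]; last exact: hy.
  by apply: ((key x).1 Px).
exfalso.
have: forall L : seq {set 'I_n.+2}, exists y,
    (forall G, G \in L -> B_facet n G -> ~ QG G 1 h -> QG G 1 y) /\ ~ P y.
  elim => [|G L [y [hy nPy]]]; first by exists 1; split.
  case: (classic (B_facet n G /\ ~ QG G 1 h)) => [[fG nh]|HG].
    have : ~ (forall z, QG G 1 z -> P z) by move=> hz; apply: H; exists G.
    case/(not_all_ex_not _ _) => z Hz.
    have qz : QG G 1 z by apply: NNPP => nq; apply: Hz => q; exfalso; exact: nq q.
    have nPz : ~ P z by move=> pz; apply: Hz => _.
    exists (y * z); split.
      move=> G'; rewrite in_cons => /orP [/eqP -> _ _ | G'L fG' nh'].
        exact: QG_mulr.
      by rewrite mulrC; apply: QG_mulr; apply: hy.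
    by move/Pprime => [].
  exists y; split => // G'; rewrite in_cons => /orP [/eqP -> fG nh|].
    by exfalso; apply: HG.
  exact: hy.
move/(_ (enum [set: {set 'I_n.+2}])) => [y [hy nPy]]; apply: nPy; apply/key => G fG nh.
by apply: hy; rewrite ?mem_enum ?inE.
Qed.


Definition gpow (G : {set 'I_n.+2}) (r : nat) : MN :=
  [multinom (if i \in G then r else 0%N) | i < n.+2].

Lemma degG_U (G : {set 'I_n.+2}) (j : 'I_n.+2) : j \notin G -> degG G U_(j)%MM = 1%N.
Proof.
move=> jG; rewrite /degG (bigD1 j) //= mnm1E eqxx big1 // => i /andP [_ ij].
by rewrite mnm1E eq_sym (negbTE ij).
Qed.

Lemma degG_gpow G r : degG G (gpow G r) = 0%N.
Proof. by rewrite /degG big1 // => i iG; rewrite mnmE (negbTE iG). Qed.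

Lemma pow0 x : ideal_pow (I_B k n) 0 x.
Proof.
exists [:: (x, 1)]; split; last by rewrite big_seq1 mulr1.
move=> p; rewrite inE => /eqP -> /=; exists [::]; split => //; split => //.
by rewrite big_nil.
Qed.

Lemma build G r w : (3 <= n)%N -> B_facet n G -> (r <= degG G w)%N ->
  ideal_pow (I_B k n) r ('X_[(w + gpow G r)%MM]).
Proof.
move=> n3 fG; elim: r w => [|r IH] w hr; first exact: pow0.
have : degG G w != 0%N by lia.
rewrite /degG sum_nat_eq0 => /forallPn [j]; rewrite negb_imply => /andP [jG wj].
set w' := (w - U_(j))%MM.
have ew : w = (w' + U_(j))%MM by rewrite submK // lep1mP.
have hr' : (r <= degG G w')%N by move: hr; rewrite ew degGD degG_U //; lia.
have [s [hs e]] := IH w' hr'.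
set g := \prod_(i in j |: G) ('X_i : MP).
have eg : 'X_[(w + gpow G r.+1)%MM] = 'X_[(w' + gpow G r)%MM] * g.
  rewrite /g prodX -mpolyXD; congr 'X_[_]; apply/mnmP => i.
  rewrite {1}ew !mnmDE !mnmE monoTE in_setU1.
  case: (eqVneq i j) => [->|ij]; first by rewrite (negbTE jG) ?eqxx /=; move: wj; lia.
  have ji : (j == i) = false by rewrite eq_sym (negbTE ij).
  rewrite ?ji ?(negbTE ij) /=; case: (i \in G) => /=; lia.
exists [seq (p.1, p.2 * g) | p <- s]; split.
  move=> p /mapP [q qs ->] /=; have [l [sz [hl ->]]] := hs q qs.
  exists (g :: l); split; first by rewrite /= sz.
  split; last by rewrite big_cons mulrC.
  move=> z; rewrite in_cons => /orP [/eqP -> | /hl //].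
  exists [:: (1, g)]; split; last by rewrite big_seq1 mul1r.
  move=> p0; rewrite inE => /eqP -> /=; exists (j |: G); split => //.
  exact: nonface_ext.
rewrite eg e big_map mulr_suml; apply: eq_bigr => q _; by rewrite mulrA.
Qed.

Definition mid (l : 'I_n.+2) : nat := (1 <= l <= n)%N.

Lemma sum_mid : (\sum_(l < n.+2) mid l)%N = n.
Proof.
rewrite /mid -(big_mkord xpredT (fun l => nat_of_bool (1 <= l <= n)%N)).
rewrite big_nat_recr //= big_nat_recl //= ltnn addn0 add0n.
rewrite (eq_big_nat _ _ (F2 := fun _ => 1%N)) => [|i /andP [_ hi]].
  by rewrite sum_nat_const_nat subn0 muln1.
by rewrite hi.
Qed.


Definition bOf (a : MN) : MN :=
  [multinom (if (val i == 0%N) || (val i == n.+1) then a i else (a i).-1) | i < n.+2].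

Lemma ab_pt (a : MN) (l : 'I_n.+2) : (a l <= bOf a l + mid l)%N /\
  ((mid l == 0%N) || (a l != 0%N) -> a l = (bOf a l + mid l)%N).
Proof.
rewrite /bOf mnmE /mid /=; have := ltn_ord l.
case: ifP => [/orP [] /eqP -> | /norP [/eqP h1 /eqP h2]] /=.
- by move=> _; rewrite addn0.
- by move=> _; rewrite ?ltnn ?andbF ?addn0.
move=> hl; have -> : (1 <= l <= n)%N by lia.
by split; [lia | move=> /= /eqP ?; lia].
Qed.

Lemma deg_comp (a : MN) G : (3 <= n)%N -> B_facet n G ->
  (degG G a <= degG G (bOf a) + (n - 2))%N.
Proof.
move=> n3 fG.
have h1 : (degG G a <= \sum_(l < n.+2 | l \notin G) (bOf a l + mid l))%N.
  by apply: leq_sum => l _; case: (ab_pt a l).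
rewrite big_split /= in h1.
have [c [i [j [eG [hc [hi [hj hij]]]]]]] := facet_shape _ n3 fG.
have iG : i \in G by rewrite eG !inE eqxx !orbT.
have jG : j \in G by rewrite eG !inE eqxx !orbT.
have := sum_mid; rewrite (bigID (fun l => l \in G)) /=.
set S := (X in (X + _)%N = n) => e.
have h2 : (2 <= S)%N.
  rewrite /S (bigD1 i) //= (bigD1 j) /=; last first.
    by rewrite jG /=; apply/eqP => /(congr1 val) /=; lia.
  by rewrite /mid hi hj.
apply: (leq_trans h1); rewrite leq_add2l.
set T := (X in (X <= _)%N).
have eT : T = (n - S)%N by rewrite -e addKn.
rewrite eT; lia.
Qed.

Lemma mdeg_ab (a : MN) : (mdeg a <= mdeg (bOf a) + n)%N /\
  ((forall i : 'I_(n.+2), (1 <= val i <= n)%N -> a i != 0%N) ->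
      (mdeg (bOf a) + n)%N = mdeg a).
Proof.
rewrite !mdegE; split.
  rewrite -[X in (_ <= _ + X)%N]sum_mid -big_split /=.
  by apply: leq_sum => l _; case: (ab_pt a l).
move=> h; rewrite -[X in (_ + X)%N]sum_mid -big_split /=; apply/esym/eq_bigr => l _; case: (ab_pt a l) => _; apply.
rewrite /mid; case: (boolP (1 <= l <= n)%N) => //= hl; exact: h.
Qed.


Lemma main_aux (m : nat) (a : MN) :
  (3 <= n)%N -> (1 <= m)%N ->
  (symbolic_power _ (I_B k n) (m%:Z) ('X_[a] : MP) ->
   symbolic_power _ (I_B k n) (m%:Z - (n%:Z - 2)) ('X_[bOf a] : MP))
  /\ (mdeg a <= mdeg (bOf a) + n)%N
  /\ ((forall i : 'I_(n.+2), (1 <= val i <= n)%N -> a i != 0%N) ->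
      (mdeg (bOf a) + n)%N = mdeg a).
Proof.
move=> n3 m1.
split; last exact: mdeg_ab.
case=> [hm|hsym]; first by exfalso; move: hm; rewrite lez_nat; lia.
case: (leqP m (n - 2)) => hmn.
  by left; lia.
right.
set m' := (m - (n - 2))%N.
have em : absz (m%:Z - (n%:Z - 2))%R = m'.
  have -> : m%:Z - (n%:Z - 2) = m'%:Z by rewrite /m'; lia.
  by [].
rewrite em => P aP.
have [G [fG hP]] := assoc_facet P aP.
have [s [ns hs]] := hsym P aP.
have nq : ~ QG G 1 s by move/(hP s).2.
have [u hu] := not_all_ex_not _ _ nq.
have nz : s@_u != 0.
  by case: (eqVneq s@_u 0) => // e; exfalso; apply: hu; rewrite e eqxx.
have d0 : degG G u = 0%N.
  by case E: (degG G u) => //; exfalso; apply: hu => _; rewrite E.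
have hq := pow_QG _ _ _ fG hs.
have := hq (a + u)%MM; rewrite mcoeffMX => /(_ nz); rewrite degGD d0 addn0 => ha.
have hb := deg_comp a G n3 fG.
exists 'X_[gpow G m']; split.
  move/(hP _).1 => q; have := q (gpow G m'); rewrite mcoeffX eqxx degG_gpow.
  by move/(_ (oner_neq0 _)).
rewrite -mpolyXD addmC; apply: build => //; rewrite /m'; lia.
Qed.

End Aux.

Theorem lemma3p9 (k : fieldType) (n m : nat) (a : 'X_{1..n.+2}) :
  (3 <= n)%N -> (1 <= m)%N ->
  let b : 'X_{1..n.+2} :=
    [multinom (if (val i == 0%N) || (val i == n.+1) then a i else (a i).-1)
     | i < n.+2] in
  (symbolic_power _ (I_B k n) (m%:Z) ('X_[a] : {mpoly k[n.+2]}) ->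
   symbolic_power _ (I_B k n) (m%:Z - (n%:Z - 2)) ('X_[b] : {mpoly k[n.+2]}))
  /\ (mdeg a <= mdeg b + n)%N
  /\ ((forall i : 'I_(n.+2), (1 <= val i <= n)%N -> a i != 0%N) ->
      (mdeg b + n)%N = mdeg a).
Proof.
move=> n3 m1 b.
exact: main_aux.
Qed.
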